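(* Let $X$ be a Tychonoff space and $AP(X)$ its free abelian precompact group. If $X$ is not reversible, then $AP(X)$ is not $g$-reversible.
   Context: All topological groups are assumed Hausdorff. A topological space $X$ is reversible if every continuous bijection of $X$ onto itself is open. A topological group $G$ is called $g$-reversible if every continuous automorphism of $G$ (i.e. every continuous group isomorphism of $G$ onto itself) is an open map. For a Tychonoff space $X$, the free abelian precompact group $AP(X)$ is the free abelian group on the set $X$ equipped with the initial group topology generated by all homomorphisms $AP(X)\to\mathbb{T}=\mathbb{R}/\mathbb{Z}$ whose restriction to $X$ is continuous; it is a Hausdorff precompact abelian group containing $X$ as a topological subspace, and every continuous map from $X$ into a precompact abelian group extends uniquely to a continuous homomorphism on $AP(X)$. *)

(* Defs.v *)
From Stdlib Require Import Reals Lra Lia ZArith List Classical ClassicalEpsilon.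
Open Scope R_scope.

Definition topology (X : Type) := (X -> Prop) -> Prop.

Definition is_topology {X : Type} (tau : topology X) : Prop :=
  tau (fun _ => True) /\
  (forall U V, tau U -> tau V -> tau (fun x => U x /\ V x)) /\
  (forall F : (X -> Prop) -> Prop, (forall U, F U -> tau U) ->
      tau (fun x => exists U, F U /\ U x)).

Definition continuous {X Y : Type} (tX : topology X) (tY : topology Y) (f : X -> Y) : Prop :=
  forall V, tY V -> tX (fun x => V (f x)).

Definition open_map {X Y : Type} (tX : topology X) (tY : topology Y) (f : X -> Y) : Prop :=
  forall U, tX U -> tY (fun y => exists x, U x /\ f x = y).

Definition bijective {X Y : Type} (f : X -> Y) : Prop :=
  (forall x1 x2, f x1 = f x2 -> x1 = x2) /\ (forall y, exists x, f x = y).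

Definition reversible {X : Type} (tX : topology X) : Prop :=
  forall f : X -> X, bijective f -> continuous tX tX f -> open_map tX tX f.

Definition continuous_R {X : Type} (tX : topology X) (f : X -> R) : Prop :=
  forall x eps, 0 < eps ->
    exists U, tX U /\ U x /\ forall y, U y -> Rabs (f y - f x) < eps.

Definition T1 {X : Type} (tX : topology X) : Prop :=
  forall x y : X, x <> y -> exists U, tX U /\ U x /\ ~ U y.

Definition completely_regular {X : Type} (tX : topology X) : Prop :=
  forall (F : X -> Prop) (x : X), tX (fun y => ~ F y) -> ~ F x ->
    exists f : X -> R, continuous_R tX f /\ f x = 0 /\ forall y, F y -> f y = 1.

Definition tychonoff {X : Type} (tX : topology X) : Prop :=
  is_topology tX /\ T1 tX /\ completely_regular tX.

(* Elements of T are represented by reals; s and t are eps-close in T iff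
   they are eps-close modulo an integer. *)
Definition nearT (s t eps : R) : Prop := exists z : Z, Rabs (s - t - IZR z) < eps.
Definition is_int (r : R) : Prop := exists z : Z, r = IZR z.

Definition continuous_T {X : Type} (tX : topology X) (f : X -> R) : Prop :=
  forall x eps, 0 < eps ->
    exists U, tX U /\ U x /\ forall y, U y -> nearT (f y) (f x) eps.

Definition finsupp {X : Type} (w : X -> Z) : Prop :=
  exists l : list X, forall x, w x <> 0%Z -> In x l.

Definition FA (X : Type) : Type := { w : X -> Z | finsupp w }.

Lemma finsupp_add {X : Type} (w1 w2 : X -> Z) :
  finsupp w1 -> finsupp w2 -> finsupp (fun x => (w1 x + w2 x)%Z).
Proof.
  intros [l1 H1] [l2 H2]; exists (l1 ++ l2); intros x Hx.
  apply in_or_app. destruct (Z.eq_dec (w1 x) 0) as [E|E].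
  - right; apply H2; lia.
  - left; apply H1; exact E.
Qed.

Lemma finsupp_opp {X : Type} (w : X -> Z) : finsupp w -> finsupp (fun x => (- w x)%Z).
Proof. intros [l H]; exists l; intros x Hx; apply H; lia. Qed.

Lemma finsupp_zero (X : Type) : finsupp (fun _ : X => 0%Z).
Proof. exists nil; intros x Hx; lia. Qed.

Definition FA_add {X : Type} (a b : FA X) : FA X :=
  exist _ (fun x => (proj1_sig a x + proj1_sig b x)%Z)
        (finsupp_add _ _ (proj2_sig a) (proj2_sig b)).
Definition FA_opp {X : Type} (a : FA X) : FA X :=
  exist _ (fun x => (- proj1_sig a x)%Z) (finsupp_opp _ (proj2_sig a)).
Definition FA_zero (X : Type) : FA X := exist _ (fun _ => 0%Z) (finsupp_zero X).

Lemma finsupp_delta {X : Type} (x : X) :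
  finsupp (fun y => if excluded_middle_informative (x = y) then 1%Z else 0%Z).
Proof.
  exists (x :: nil); intros y Hy.
  destruct (excluded_middle_informative (x = y)) as [E|E].
  - left; exact E.
  - lia.
Qed.

Definition delta {X : Type} (x : X) : FA X :=
  exist _ (fun y => if excluded_middle_informative (x = y) then 1%Z else 0%Z)
        (finsupp_delta x).

(* A homomorphism FA X -> T, represented as a map to R that is additive mod Z,
   whose restriction to X is continuous. *)
Definition ap_character {X : Type} (tX : topology X) (phi : FA X -> R) : Prop :=
  (forall a b, is_int (phi (FA_add a b) - phi a - phi b)) /\
  continuous_T tX (fun x => phi (delta x)).

(* The initial topology on FA X generated by all such characters:
   A is open iff every point of A has a basic neighbourhood
   { b | forall phi in l, phi b is eps-close to phi a in T } contained in A. *)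
Definition ap_topology {X : Type} (tX : topology X) : topology (FA X) :=
  fun A => forall a, A a ->
    exists (l : list (FA X -> R)) (eps : R),
      (forall phi, In phi l -> ap_character tX phi) /\ 0 < eps /\
      forall b, (forall phi, In phi l -> nearT (phi b) (phi a) eps) -> A b.

Definition group_automorphism {X : Type} (f : FA X -> FA X) : Prop :=
  (forall a b, f (FA_add a b) = FA_add (f a) (f b)) /\ bijective f.

Definition AP_g_reversible {X : Type} (tX : topology X) : Prop :=
  forall f : FA X -> FA X, group_automorphism f ->
    continuous (ap_topology tX) (ap_topology tX) f ->
    open_map (ap_topology tX) (ap_topology tX) f.

(* Main.v *)
Require Import Defs.
From Stdlib Require Import Reals List.
From Stdlib Require Import Lra Lia ZArith Classical ClassicalEpsilon FunctionalExtensionality PropExtensionality ProofIrrelevance Permutation.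
Open Scope R_scope.

Lemma FA_eq {X} (a b : FA X) : (forall x, proj1_sig a x = proj1_sig b x) -> a = b.
Proof.
  destruct a as [a Ha], b as [b Hb]; simpl; intros H.
  assert (a = b) by (apply functional_extensionality; exact H). subst b.
  f_equal; apply proof_irrelevance.
Qed.

Definition Xdec {X : Type} : forall x y : X, {x = y} + {x <> y} :=
  fun x y => excluded_middle_informative (x = y).

Fixpoint sumL {X} (h : X -> R) (w : X -> Z) (l : list X) : R :=
  match l with nil => 0 | x :: l' => IZR (w x) * h x + sumL h w l' end.

Lemma sumL_filter {X} h w (l : list X) :
  sumL h w l = sumL h w (filter (fun x => if Z.eq_dec (w x) 0 then false else true) l).
Proof.
  induction l as [|x l IH]; simpl; auto.
  destruct (Z.eq_dec (w x) 0) as [E|E]; simpl; rewrite IH; auto.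
  rewrite E; simpl; ring.
Qed.

Lemma sumL_perm {X} h w (l1 l2 : list X) : Permutation l1 l2 -> sumL h w l1 = sumL h w l2.
Proof. induction 1; simpl; try lra. Qed.

Lemma sumL_indep {X} h w (l1 l2 : list X) :
  NoDup l1 -> NoDup l2 -> (forall x, w x <> 0%Z -> In x l1) -> (forall x, w x <> 0%Z -> In x l2) ->
  sumL h w l1 = sumL h w l2.
Proof.
  intros N1 N2 C1 C2. rewrite (sumL_filter h w l1), (sumL_filter h w l2).
  apply sumL_perm. apply NoDup_Permutation; try (apply NoDup_filter; assumption).
  intros x; rewrite !filter_In. destruct (Z.eq_dec (w x) 0) as [E|E].
  - split; intros [_ H]; discriminate.
  - split; intros [_ H]; split; auto.
Qed.

Lemma sumL_add {X} h (a b : X -> Z) l :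
  sumL h (fun x => (a x + b x)%Z) l = sumL h a l + sumL h b l.
Proof. induction l; simpl; [ring|]. rewrite plus_IZR, IHl; ring. Qed.

Definition supp_list {X} (a : FA X) : list X :=
  nodup Xdec (proj1_sig (constructive_indefinite_description
     (fun l => forall x, proj1_sig a x <> 0%Z -> In x l) (proj2_sig a))).

Lemma supp_list_spec {X} (a : FA X) :
  NoDup (supp_list a) /\ forall x, proj1_sig a x <> 0%Z -> In x (supp_list a).
Proof.
  split; [apply NoDup_nodup|]. intros x Hx. unfold supp_list. apply nodup_In.
  exact (proj2_sig (constructive_indefinite_description
     (fun l => forall x, proj1_sig a x <> 0%Z -> In x l) (proj2_sig a)) x Hx).
Qed.

Definition charF {X} (h : X -> R) (a : FA X) : R := sumL h (proj1_sig a) (supp_list a).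

Lemma charF_add {X} (h : X -> R) a b : charF h (FA_add a b) = charF h a + charF h b.
Proof.
  destruct (supp_list_spec a) as [Na Ca]. destruct (supp_list_spec b) as [Nb Cb].
  destruct (supp_list_spec (FA_add a b)) as [Nab Cab].
  set (l := nodup Xdec (supp_list a ++ supp_list b)).
  assert (Nl : NoDup l) by apply NoDup_nodup.
  unfold charF.
  rewrite (sumL_indep h _ (supp_list (FA_add a b)) l),
          (sumL_indep h _ (supp_list a) l), (sumL_indep h _ (supp_list b) l); auto.
  - simpl. apply sumL_add.
  - intros x Hx; apply nodup_In, in_or_app; right; auto.
  - intros x Hx; apply nodup_In, in_or_app; left; auto.
  - intros x Hx; apply nodup_In, in_or_app. simpl in Hx.
    destruct (Z.eq_dec (proj1_sig a x) 0); [right; apply Cb; lia | left; auto].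
Qed.

Lemma charF_delta {X} (h : X -> R) y : charF h (delta y) = h y.
Proof.
  destruct (supp_list_spec (delta y)) as [N C]. unfold charF.
  rewrite (sumL_indep h _ _ (y :: nil)); auto.
  - simpl. destruct (excluded_middle_informative (y = y)); [simpl; ring | congruence].
  - constructor; [simpl; auto | constructor].
  - intros x Hx; simpl in Hx. destruct (excluded_middle_informative (y = x)); [left; auto | lia].
Qed.

Lemma charF_character {X} (tX : topology X) h :
  continuous_T tX h -> ap_character tX (charF h).
Proof.
  intros Hh; split.
  - intros a b; exists 0%Z; rewrite charF_add; simpl; ring.
  - intros x eps He. destruct (Hh x eps He) as [U [HU [Ux HUy]]].
    exists U; split; auto; split; auto. intros y Uy. rewrite !charF_delta; auto.
Qed.

Lemma near_open {X} tX (phi : FA X -> R) c eps :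
  ap_character tX phi -> ap_topology tX (fun b => nearT (phi b) c eps).
Proof.
  intros Hphi a [z Hz]. exists (phi :: nil), (eps - Rabs (phi a - c - IZR z)).
  split; [intros p [<-|[]]; exact Hphi|]. split; [lra|].
  intros b Hb. destruct (Hb phi (or_introl eq_refl)) as [z' Hz'].
  exists (z + z')%Z. rewrite plus_IZR.
  replace (phi b - c - (IZR z + IZR z')) with ((phi b - phi a - IZR z') + (phi a - c - IZR z)) by ring.
  eapply Rle_lt_trans; [apply Rabs_triang|]. lra.
Qed.

Lemma delta_cont {X} (tX : topology X) : is_topology tX ->
  forall W, ap_topology tX W -> tX (fun y => W (delta y)).
Proof.
  intros [HT [HI HU]] W HW.
  assert (key : forall x, W (delta x) -> exists O, tX O /\ O x /\ forall y, O y -> W (delta y)).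
  { intros x Hx. destruct (HW _ Hx) as [l [eps [Hc [He Hb]]]].
    assert (H : forall l', (forall phi, In phi l' -> ap_character tX phi) ->
      exists O, tX O /\ O x /\ forall y, O y -> forall phi, In phi l' ->
         nearT (phi (delta y)) (phi (delta x)) eps).
    { induction l' as [|p l' IH]; intros Hl'.
      - exists (fun _ => True); split; auto; split; auto. intros y _ phi [].
      - destruct IH as [O [HO [Ox HOy]]]. { intros; apply Hl'; right; auto. }
        destruct (proj2 (Hl' p (or_introl eq_refl)) x eps He) as [U [HUo [Ux HUy]]].
        exists (fun y => U y /\ O y). split; [apply HI; auto|]. split; [auto|].
        intros y [Uy Oy] phi [<-|Hin]; [apply HUy; auto| apply HOy; auto]. }
    destruct (H l Hc) as [O [HO [Ox HOy]]]. exists O; split; [exact HO|split; [exact Ox|]].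
    intros y Oy; apply Hb; intros phi Hin; apply HOy; auto. }
  assert (E : (fun y => W (delta y)) =
     (fun y => exists O, (tX O /\ forall z, O z -> W (delta z)) /\ O y)).
  { apply functional_extensionality; intros y; apply propositional_extensionality; split.
    - intros Hy; destruct (key y Hy) as [O [HO [Oy HOz]]]; exists O; auto.
    - intros [O [[_ HOz] Oy]]; auto. }
  rewrite E; apply (HU (fun O => tX O /\ forall z, O z -> W (delta z))).
  intros O [HO _]; exact HO.
Qed.

Lemma inv_exists {X} (f : X -> X) : bijective f ->
  {g : X -> X | (forall y, f (g y) = y) /\ (forall x, g (f x) = x)}.
Proof.
  intros [Hi Hs]. exists (fun y => proj1_sig (constructive_indefinite_description _ (Hs y))).
  split.
  - intros y; exact (proj2_sig (constructive_indefinite_description _ (Hs y))).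
  - intros x; apply Hi; exact (proj2_sig (constructive_indefinite_description _ (Hs (f x)))).
Qed.

Lemma finsupp_comp {X} (f g : X -> X) (Hfg : forall y, f (g y) = y) (w : X -> Z) :
  finsupp w -> finsupp (fun y => w (g y)).
Proof.
  intros [l Hl]. exists (map f l). intros y Hy. rewrite <- (Hfg y). apply in_map. auto.
Qed.

Definition extF {X} (f g : X -> X) (Hfg : forall y, f (g y) = y) (a : FA X) : FA X :=
  exist _ (fun y => proj1_sig a (g y)) (finsupp_comp f g Hfg _ (proj2_sig a)).

Theorem theorem6p2 (X : Type) (tX : topology X) :
  tychonoff tX -> ~ reversible tX -> ~ AP_g_reversible tX.
Proof.
  intros [Htop [_ Hcr]] Hnrev Hg.
  apply Hnrev. intros f Hbij Hfc.
  destruct (inv_exists f Hbij) as [g [Hfg Hgf]].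
  set (F := extF f g Hfg).
  assert (Fadd : forall a b, F (FA_add a b) = FA_add (F a) (F b)).
  { intros a b; apply FA_eq; intros; reflexivity. }
  assert (Finj : forall a b, F a = F b -> a = b).
  { intros a b H; apply FA_eq; intros x.
    pose proof (f_equal (fun c => proj1_sig c (f x)) H) as H'. simpl in H'.
    rewrite Hgf in H'; exact H'. }
  assert (Fsurj : forall b, exists a, F a = b).
  { intros b. exists (extF g f Hgf b). apply FA_eq; intros y; simpl. rewrite Hfg; reflexivity. }
  assert (Fdelta : forall x, F (delta x) = delta (f x)).
  { intros x; apply FA_eq; intros y; simpl.
    destruct (excluded_middle_informative (x = g y)) as [e1|n1],
             (excluded_middle_informative (f x = y)) as [e2|n2]; try reflexivity; exfalso.
    - subst x; apply n2; apply Hfg.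
    - subst y; apply n1; rewrite Hgf; reflexivity. }
  assert (Fcont : continuous (ap_topology tX) (ap_topology tX) F).
  { intros V HV a Ha. destruct (HV _ Ha) as [l [eps [Hc [He Hb]]]].
    exists (map (fun phi => fun c => phi (F c)) l), eps. split.
    - intros psi Hin. apply in_map_iff in Hin. destruct Hin as [phi [<- Hphi]].
      destruct (Hc phi Hphi) as [Hadd Hcont]. split.
      + intros a1 b1. rewrite Fadd. apply Hadd.
      + intros x e He'. destruct (Hcont (f x) e He') as [U [HU [Ux HUy]]].
        exists (fun y => U (f y)). split; [apply Hfc; auto|]. split; [auto|].
        intros y Uy. rewrite !Fdelta. apply HUy; auto.
    - split; auto. intros b Hb'. apply Hb. intros phi Hphi.
      apply (Hb' (fun c => phi (F c))). apply in_map_iff; exists phi; auto. }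
  assert (Hopen : open_map (ap_topology tX) (ap_topology tX) F).
  { apply Hg; auto. split; auto. split; auto. }
  intros U HU.
  set (W := fun b => exists V, ap_topology tX V /\ V b /\ forall y, V (delta y) -> U y).
  assert (HW : ap_topology tX W).
  { intros b [V [HV [Vb HVU]]]. destruct (HV b Vb) as [l [eps [Hc [He Hb]]]].
    exists l, eps; split; [exact Hc|split; [exact He|]]. intros c Hc'. exists V; split; [exact HV|split; [apply Hb; exact Hc'|exact HVU]]. }
  assert (HW2 : forall x, U x -> W (delta x)).
  { intros x Ux. destruct (Hcr (fun y => ~ U y) x) as [h0 [Hh0c [Hh0x Hh01]]].
    - replace (fun y => ~ ~ U y) with U; auto.
      apply functional_extensionality; intros; apply propositional_extensionality;
        split; [intros ? ?; auto | apply NNPP].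
    - auto.
    - set (h := fun y => h0 y / 2).
      assert (Hch : ap_character tX (charF h)).
      { apply charF_character. intros x' eps He.
        destruct (Hh0c x' (2*eps)) as [U' [HU' [Ux' HUy']]]; [lra|].
        exists U'; split; auto; split; auto; intros y Uy; exists 0%Z.
        pose proof (HUy' y Uy) as Hy. unfold h. simpl.
        revert Hy; unfold Rabs; destruct Rcase_abs; destruct Rcase_abs; lra. }
      exists (fun b => nearT (charF h b) (charF h (delta x)) (1/4)).
      split; [apply near_open; auto|]. split.
      + exists 0%Z. simpl. replace (charF h (delta x) - charF h (delta x) - 0) with 0 by ring.
        rewrite Rabs_R0; lra.
      + intros y [z Hz]. rewrite !charF_delta in Hz. unfold h in Hz. rewrite Hh0x in Hz.
        apply NNPP; intro nU. rewrite (Hh01 y nU) in Hz.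
        destruct (Z_le_gt_dec z 0) as [Hz0|Hz0].
        * apply IZR_le in Hz0. revert Hz; unfold Rabs; destruct Rcase_abs; lra.
        * assert (Hz1 : (1 <= z)%Z) by lia. apply IZR_le in Hz1.
          revert Hz; unfold Rabs; destruct Rcase_abs; lra. }
  pose proof (delta_cont tX Htop _ (Hopen W HW)) as Hd.
  replace (fun y => exists x, U x /\ f x = y)
    with (fun y => exists b, W b /\ F b = delta y); [exact Hd|].
  apply functional_extensionality; intros y; apply propositional_extensionality; split.
  - intros [b [Wb Fb]]. exists (g y).
    assert (b = delta (g y)) as ->.
    { apply Finj. rewrite Fb, Fdelta, Hfg; reflexivity. }
    split; [|apply Hfg]. destruct Wb as [V [_ [Vb HVU]]]. apply HVU; exact Vb.
  - intros [x [Ux <-]]. exists (delta x); split; [apply HW2; auto | apply Fdelta].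
Qed.
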